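(* Let $\mathcal{X}$ and $\mathcal{Y}$ be finite sets, let $\Pr$ be a probability distribution on $\mathcal{X}$, let $\delta:\mathcal{X}\times\mathcal{Y}\to\mathbb{R}$, and let $\bar\pi,\pi_1,\dots,\pi_m$ be stochastic policies, each $\pi_i$ having support for $\bar\pi$. Let $\mathcal{D}=\bigcup_{i=1}^m\mathcal{D}^i$ be a log dataset in which, for each $i$, $\mathcal{D}^i$ consists of $n_i$ samples $(x^i_j,y^i_j,\delta^i_j,p^i_j)$, $j=1,\dots,n_i$, with $x^i_j\sim\Pr$, $y^i_j\sim\pi_i(\cdot\mid x^i_j)$, $\delta^i_j=\delta(x^i_j,y^i_j)$, $p^i_j=\pi_i(y^i_j\mid x^i_j)$, all draws independent; let $n=\sum_in_i$ and $\pi_{avg}(y\mid x)=\frac1n\sum_in_i\pi_i(y\mid x)$. Define $$\hat U_{naive}(\bar\pi)=\frac1n\sum_{i=1}^m\sum_{j=1}^{n_i}\delta^i_j\frac{\bar\pi(y^i_j\mid x^i_j)}{p^i_j},\qquad \hat U_{bal}(\bar\pi)=\frac1n\sum_{i=1}^m\sum_{j=1}^{n_i}\delta^i_j\frac{\bar\pi(y^i_j\mid x^i_j)}{\pi_{avg}(y^i_j\mid x^i_j)}.$$ Then $\mathrm{Var}_{\mathcal{D}}[\hat U_{bal}(\bar\pi)]\le\mathrm{Var}_{\mathcal{D}}[\hat U_{naive}(\bar\pi)]$.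
   Context: A stochastic policy $\pi$ assigns to each $x\in\mathcal{X}$ a probability distribution $\pi(\cdot\mid x)$ on $\mathcal{Y}$. A policy $\pi$ has support for a policy $\pi'$ if for all $x\in\mathcal{X},y\in\mathcal{Y}$, $\delta(x,y)\pi'(y\mid x)\neq0$ implies $\pi(y\mid x)>0$. Variances are taken over the random draw of $\mathcal{D}$. *)

(* Defs.v *)
From HB Require Import structures.
From mathcomp Require Import all_boot all_order all_algebra.
Set Implicit Arguments. Unset Strict Implicit. Unset Printing Implicit Defensive.
Import Order.TTheory GRing.Theory Num.Theory.
Local Open Scope ring_scope.

Section LogData.
Variables (R : realFieldType) (X Y : finType).

Definition is_distribution (Pr : X -> R) : Prop :=
  (forall x, 0 <= Pr x) /\ \sum_(x : X) Pr x = 1.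

(* a stochastic policy: pi x y = pi(y | x) *)
Definition is_policy (pi : X -> Y -> R) : Prop :=
  (forall x y, 0 <= pi x y) /\ (forall x, \sum_(y : Y) pi x y = 1).

Definition has_support (delta : X -> Y -> R) (pi pi' : X -> Y -> R) : Prop :=
  forall x y, delta x y * pi' x y != 0 -> 0 < pi x y.

Variables (m : nat) (ns : 'I_m -> nat).

Definition sample_idx : finType := {i : 'I_m & 'I_(ns i)}.

(* a log dataset: the (x, y) pair of each sample; delta^i_j and p^i_j are
   determined by (x, y) and are computed from it *)
Definition dataset : finType := {ffun sample_idx -> (X * Y)%type}.

Definition sample (D : dataset) (i : 'I_m) (j : 'I_(ns i)) : X * Y :=
  D (existT (fun i => 'I_(ns i)) i j).

(* probability of a dataset: all draws independent, x ~ Pr, y ~ pi_i(.|x) *)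
Definition dataset_prob (Pr : X -> R) (pis : 'I_m -> X -> Y -> R)
    (D : dataset) : R :=
  \prod_(k : sample_idx) (Pr (D k).1 * pis (tag k) (D k).1 (D k).2).

Definition Exp (Pr : X -> R) (pis : 'I_m -> X -> Y -> R) (f : dataset -> R) : R :=
  \sum_(D : dataset) dataset_prob Pr pis D * f D.

Definition Var (Pr : X -> R) (pis : 'I_m -> X -> Y -> R) (f : dataset -> R) : R :=
  Exp Pr pis (fun D => (f D - Exp Pr pis f) ^+ 2).

Definition ntot : nat := (\sum_(i < m) ns i)%N.

Definition pi_avg (pis : 'I_m -> X -> Y -> R) (x : X) (y : Y) : R :=
  (ntot%:R)^-1 * \sum_(i < m) (ns i)%:R * pis i x y.

Definition U_naive (delta : X -> Y -> R) (pis : 'I_m -> X -> Y -> R)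
    (pibar : X -> Y -> R) (D : dataset) : R :=
  (ntot%:R)^-1 * \sum_(i < m) \sum_(j < ns i)
     let xy := sample D j in
     delta xy.1 xy.2 * (pibar xy.1 xy.2 / pis i xy.1 xy.2).

Definition U_bal (delta : X -> Y -> R) (pis : 'I_m -> X -> Y -> R)
    (pibar : X -> Y -> R) (D : dataset) : R :=
  (ntot%:R)^-1 * \sum_(i < m) \sum_(j < ns i)
     let xy := sample D j in
     delta xy.1 xy.2 * (pibar xy.1 xy.2 / pi_avg pis xy.1 xy.2).

End LogData.

(* Main.v *)
Require Import Defs.
From mathcomp Require Import all_boot all_order all_algebra.
From mathcomp Require Import ring lra.
Set Implicit Arguments. Unset Strict Implicit. Unset Printing Implicit Defensive.
Import Order.TTheory GRing.Theory Num.Theory.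
Local Open Scope ring_scope.

Section Gen.
Variables (R : realFieldType) (X Y : finType) (m : nat) (ns : 'I_m -> nat).
Variables (Pr : X -> R) (pis : 'I_m -> X -> Y -> R).
Local Notation K := (sample_idx ns).
Local Notation E := (Exp (ns := ns) Pr pis).

Definition q (k : K) (t : X * Y) : R := Pr t.1 * pis (tag k) t.1 t.2.
Definition Ek (k : K) (g : X * Y -> R) : R := \sum_t q k t * g t.

Lemma Exp_prod (h : K -> X * Y -> R) :
  E (fun D => \prod_k h k (D k)) = \prod_k Ek k (h k).
Proof.
rewrite /Exp /dataset_prob /Ek bigA_distr_bigA; apply: eq_bigr => D _.
by rewrite -big_split.
Qed.

Lemma Exp_sum (I : finType) (F : I -> dataset X Y ns -> R) :
  E (fun D => \sum_i F i D) = \sum_i E (F i).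
Proof.
rewrite /Exp (exchange_big) /=; apply: eq_bigr => D _; by rewrite mulr_sumr.
Qed.

Lemma Exp_scale c f : E (fun D => c * f D) = c * E f.
Proof. rewrite /Exp mulr_sumr; apply: eq_bigr => D _; by rewrite mulrCA. Qed.

Hypothesis hPr : is_distribution Pr.
Hypothesis hpis : forall i, is_policy (pis i).

Lemma Ek1 k : Ek k (fun _ => 1) = 1.
Proof.
rewrite /Ek /q -(pair_bigA _ (fun x y => Pr x * pis (tag k) x y * 1)) /=.
have [_ hs] := hPr; rewrite -[RHS]hs; apply: eq_bigr => x _.
under eq_bigr do rewrite mulr1.
by rewrite -mulr_sumr; case: (hpis (tag k)) => _ ->; rewrite mulr1.
Qed.

Lemma Exp_one k g : E (fun D => g (D k)) = Ek k g.
Proof.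
pose h := fun l => if l == k then g else (fun _ => 1).
transitivity (E (fun D => \prod_l h l (D l))).
  rewrite /Exp; apply: eq_bigr => D _; congr (_ * _).
  rewrite (bigD1 k) //= /h eqxx big1 ?mulr1 // => l /negPf ->; done.
rewrite Exp_prod (bigD1 k) //= /h eqxx big1 ?mulr1 // => l /negPf ->.
exact: Ek1.
Qed.

Lemma Exp_two k l g g' : k != l ->
  E (fun D => g (D k) * g' (D l)) = Ek k g * Ek l g'.
Proof.
move=> nkl.
pose h := fun j => if j == k then g else if j == l then g' else (fun _ => 1).
have hl : h l = g'. by rewrite /h eq_sym (negPf nkl) eqxx.
transitivity (E (fun D => \prod_j h j (D j))).
  rewrite /Exp; apply: eq_bigr => D _; congr (_ * _).
  rewrite (bigD1 k) //= (bigD1 l) /=; last by rewrite eq_sym.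
  rewrite /h eqxx eq_sym (negPf nkl) eqxx big1 ?mulr1 ?mulrA // => j /andP[/negPf -> /negPf ->]; done.
rewrite Exp_prod (bigD1 k) //= (bigD1 l) /=; last by rewrite eq_sym.
rewrite hl {1}/h eqxx big1 ?mulr1 ?mulrA // => j /andP[jk jl].
by rewrite /h (negPf jk) (negPf jl) Ek1.
Qed.

Lemma Ek_lin k g c : Ek k (fun t => g t - c) = Ek k g - c.
Proof.
rewrite /Ek; under eq_bigr do rewrite mulrBr.
rewrite sumrB -mulr_suml; congr (_ - _).
by have := Ek1 k; rewrite /Ek; under eq_bigr do rewrite mulr1; move=> ->; rewrite mul1r.
Qed.

Lemma Var_sum c (g : K -> X * Y -> R) :
  Var Pr pis (fun D => c * \sum_k g k (D k)) =
  c ^+ 2 * \sum_k Ek k (fun t => (g k t - Ek k (g k)) ^+ 2).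
Proof.
have EE : E (fun D => c * \sum_k g k (D k)) = c * \sum_k Ek k (g k).
  by rewrite Exp_scale Exp_sum; congr (_ * _); apply: eq_bigr => k _; rewrite Exp_one.
rewrite /Var EE.
set gh := fun k t => g k t - Ek k (g k).
have ghE : forall k, Ek k (gh k) = 0 by move=> k; rewrite Ek_lin subrr.
transitivity (E (fun D => c ^+ 2 * \sum_k \sum_l gh k (D k) * gh l (D l))).
  rewrite /Exp; apply: eq_bigr => D _; congr (_ * _).
  rewrite -mulrBr -sumrB exprMn; congr (_ * _); rewrite expr2 mulr_suml; apply: eq_bigr => k _.
  by rewrite mulr_sumr.
rewrite Exp_scale Exp_sum; congr (_ * _); apply: eq_bigr => k _.
rewrite Exp_sum (bigD1 k) //= big1 ?addr0.
  by rewrite (Exp_one k (fun t => gh k t * gh k t)) /Ek; apply: eq_bigr => t _; rewrite expr2.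
move=> l lk; rewrite Exp_two; last by rewrite eq_sym.
by rewrite ghE mul0r.
Qed.


Lemma EkD k f1 f2 : Ek k (fun t => f1 t + f2 t) = Ek k f1 + Ek k f2.
Proof. by rewrite /Ek -big_split; apply: eq_bigr => t _; rewrite mulrDr. Qed.

Lemma EkZ k c f : Ek k (fun t => c * f t) = c * Ek k f.
Proof. by rewrite /Ek mulr_sumr; apply: eq_bigr => t _; rewrite mulrCA. Qed.

Lemma Ek_ext k f1 f2 : (forall t, f1 t = f2 t) -> Ek k f1 = Ek k f2.
Proof. by move=> h; apply: eq_bigr => t _; rewrite h. Qed.

Lemma Ek_var k g :
  Ek k (fun t => (g t - Ek k g) ^+ 2) = Ek k (fun t => g t ^+ 2) - Ek k g ^+ 2.
Proof.
set mu := Ek k g.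
rewrite (@Ek_ext k _ (fun t => g t ^+ 2 + ((- (2 * mu)) * g t + mu ^+ 2 * 1))); last by move=> t; ring.
by rewrite !EkD !EkZ Ek1 -/mu; ring.
Qed.

Lemma Var_ext f1 f2 : (forall D, f1 D = f2 D) -> Var (ns:=ns) Pr pis f1 = Var (ns:=ns) Pr pis f2.
Proof.
move=> h; rewrite /Var.
have -> : E f1 = E f2 by apply: eq_bigr => D _; rewrite h.
by apply: eq_bigr => D _; rewrite h.
Qed.

Lemma sigE (F : forall i : 'I_m, 'I_(ns i) -> R) :
  \sum_(i < m) \sum_(j < ns i) F i j = \sum_(k : K) F (tag k) (tagged k).
Proof. by rewrite (sig_big_dep (fun _ => true) (fun _ _ => true)). Qed.

Definition NN : R := \sum_(k : K) 1.

Lemma ntotE : (ntot ns)%:R = NN.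
Proof.
rewrite /ntot natr_sum /NN -(sigE (fun _ _ => 1)); apply: eq_bigr => i _.
by rewrite sumr_const card_ord.
Qed.

Lemma pavgE x y : pi_avg ns pis x y = NN^-1 * \sum_(k : K) pis (tag k) x y.
Proof.
rewrite /pi_avg ntotE -(sigE (fun i _ => pis i x y)); congr (_ * _); apply: eq_bigr => i _.
by rewrite sumr_const card_ord mulr_natl.
Qed.


Variables (delta pibar : X -> Y -> R).
Hypothesis hsup : forall i, has_support delta (pis i) pibar.

Definition dd (t : X * Y) : R := delta t.1 t.2 * pibar t.1 t.2.
Definition aa (k : K) (t : X * Y) : R :=
  delta t.1 t.2 * (pibar t.1 t.2 / pis (tag k) t.1 t.2).
Definition bb (t : X * Y) : R :=
  delta t.1 t.2 * (pibar t.1 t.2 / pi_avg ns pis t.1 t.2).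
Definition SS (t : X * Y) : R := \sum_(k : K) pis (tag k) t.1 t.2.
Definition UU : R := \sum_t Pr t.1 * dd t.

Lemma UnE D : U_naive delta pis pibar D = (ntot ns)%:R^-1 * \sum_k aa k (D k).
Proof.
rewrite /U_naive (sigE (fun i j => let xy := sample D j in
     delta xy.1 xy.2 * (pibar xy.1 xy.2 / pis i xy.1 xy.2))).
by congr (_ * _); apply: eq_bigr => -[i j].
Qed.

Lemma UbE D : U_bal delta pis pibar D = (ntot ns)%:R^-1 * \sum_(k : K) bb (D k).
Proof.
rewrite /U_bal (sigE (fun i j => let xy := sample D j in
     delta xy.1 xy.2 * (pibar xy.1 xy.2 / pi_avg ns pis xy.1 xy.2))).
by congr (_ * _); apply: eq_bigr => -[i j].
Qed.

Lemma NN_ge0 : 0 <= NN.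
Proof. by rewrite /NN sumr_ge0. Qed.

Lemma Ea k : Ek k (aa k) = UU.
Proof.
apply: eq_bigr => t _; rewrite /q /aa /dd.
have [d0|dn0] := eqVneq (delta t.1 t.2 * pibar t.1 t.2) 0.
  by rewrite (mulrA (delta t.1 t.2)) d0 !(mul0r, mulr0).
have hp := hsup (tag k) dn0.
rewrite mulrA; field; exact: lt0r_neq0.
Qed.

Lemma sum_Eb : \sum_k Ek k (fun t => bb t) = NN * UU.
Proof.
rewrite /Ek exchange_big /UU mulr_sumr; apply: eq_bigr => t _.
rewrite /q; under eq_bigr do rewrite mulrAC.
rewrite -mulr_sumr -/(SS t) /bb pavgE -/(SS t) /dd.
have [d0|dn0] := eqVneq (delta t.1 t.2 * pibar t.1 t.2) 0.
  by rewrite (mulrA (delta t.1 t.2)) d0 !(mul0r, mulr0).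
have [k0 _|K0] := pickP (fun _ : K => true).
  have SSp : 0 < SS t.
    rewrite /SS (bigD1 k0) //=.
    have hp : 0 < pis (tag k0) t.1 t.2 := hsup _ dn0.
    have hr : 0 <= \sum_(k | k != k0) pis (tag k) t.1 t.2.
      by apply: sumr_ge0 => k _; case: (hpis (tag k)).
    lra.
  have NNp : 0 < NN.
    rewrite /NN (bigD1 k0) //=.
    have hr : 0 <= \sum_(k | k != k0) (1 : R) by apply: sumr_ge0.
    lra.
  rewrite mulrA; field; rewrite ?lt0r_neq0 //.
have S0 : SS t = 0 by rewrite /SS big1 // => k; rewrite K0.
have N0 : NN = 0 by rewrite /NN big1 // => k; rewrite K0.
by rewrite S0 N0 !mulr0 mul0r.
Qed.


Lemma mom2 t : \sum_k q k t * bb t ^+ 2 <= \sum_k q k t * aa k t ^+ 2.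
Proof.
have [d0|dn0] := eqVneq (dd t) 0.
  rewrite big1; last by move=> k _; rewrite /bb (mulrA (delta t.1 t.2)) -/(dd t) d0 mul0r expr0n mulr0.
  rewrite big1 //; by move=> k _; rewrite /aa (mulrA (delta t.1 t.2)) -/(dd t) d0 mul0r expr0n mulr0.
have [k0 _|K0] := pickP (fun _ : K => true); last first.
  by rewrite !big1 // => k; rewrite K0.
have pp : forall k : K, 0 < pis (tag k) t.1 t.2 by move=> k; exact: hsup.
have SSp : 0 < SS t.
  rewrite /SS (bigD1 k0) //=.
  have hr : 0 <= \sum_(k | k != k0) pis (tag k) t.1 t.2.
    by apply: sumr_ge0 => k _; case: (hpis (tag k)).
  have := pp k0; lra.
have NNp : 0 < NN.
  rewrite /NN (bigD1 k0) //=.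
  have hr : 0 <= \sum_(k | k != k0) (1 : R) by apply: sumr_ge0.
  lra.
have L : \sum_k q k t * bb t ^+ 2 = Pr t.1 * dd t ^+ 2 * (NN ^+ 2 / SS t).
  rewrite /q; under eq_bigr do rewrite mulrAC.
  rewrite -mulr_sumr -/(SS t) /bb pavgE -/(SS t) (mulrA (delta t.1 t.2)) -/(dd t).
  field; rewrite ?lt0r_neq0 //.
have Rr : \sum_k q k t * aa k t ^+ 2 = Pr t.1 * dd t ^+ 2 * \sum_(k : K) (pis (tag k) t.1 t.2)^-1.
  rewrite mulr_sumr; apply: eq_bigr => k _.
  rewrite /q /aa (mulrA (delta t.1 t.2)) -/(dd t).
  field; rewrite lt0r_neq0 //.
rewrite L Rr; apply: ler_wpM2l.
  by apply: mulr_ge0; [case: hPr | exact: sqr_ge0].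
set N := NN; set S := SS t.
have E : \sum_(k : K) pis (tag k) t.1 t.2 * ((pis (tag k) t.1 t.2)^-1 - N / S) ^+ 2 =
         \sum_(k : K) (pis (tag k) t.1 t.2)^-1 - N ^+ 2 / S.
  transitivity (\sum_(k : K) ((pis (tag k) t.1 t.2)^-1 - (2 * N / S) * 1
                        + (N / S) ^+ 2 * pis (tag k) t.1 t.2)).
    apply: eq_bigr => k _; field; rewrite ?lt0r_neq0 //.
  rewrite big_split sumrB -!mulr_sumr -/NN -/N -/(SS t) -/S /=.
  field; rewrite ?lt0r_neq0 //.
have : 0 <= \sum_(k : K) pis (tag k) t.1 t.2 * ((pis (tag k) t.1 t.2)^-1 - N / S) ^+ 2.
  apply: sumr_ge0 => k _; apply: mulr_ge0; [exact: ltW | exact: sqr_ge0].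
rewrite E; lra.
Qed.

End Gen.

Theorem theorem5p3 (R : realFieldType) (X Y : finType)
  (Pr : X -> R) (delta : X -> Y -> R) (pibar : X -> Y -> R)
  (m : nat) (pis : 'I_m -> X -> Y -> R) (ns : 'I_m -> nat) :
  is_distribution Pr ->
  is_policy pibar ->
  (forall i, is_policy (pis i)) ->
  (forall i, has_support delta (pis i) pibar) ->
  Var (ns := ns) Pr pis (U_bal delta pis pibar) <=
  Var (ns := ns) Pr pis (U_naive delta pis pibar).
Proof.
move=> hPr _ hpis hsup.
set c := ((ntot ns)%:R : R)^-1.
have -> : Var (ns := ns) Pr pis (U_bal delta pis pibar) =
          Var (ns := ns) Pr pis (fun D => c * \sum_(k : sample_idx ns) (fun _ => bb ns pis delta pibar) k (D k)).
  by apply: Var_ext => D; exact: UbE.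
have -> : Var (ns := ns) Pr pis (U_naive delta pis pibar) =
          Var (ns := ns) Pr pis (fun D => c * \sum_(k : sample_idx ns) aa pis delta pibar k (D k)).
  by apply: Var_ext => D; exact: UnE.
rewrite !Var_sum // (Var_sum hPr hpis c (fun _ => bb ns pis delta pibar)); apply: ler_wpM2l; first exact: sqr_ge0.
under eq_bigr do rewrite Ek_var //.
under [X in _ <= X]eq_bigr do rewrite Ek_var // Ea //.
rewrite !sumrB.
have hB : \sum_(k : sample_idx ns) Ek Pr pis k (fun t => bb ns pis delta pibar t) = NN R ns * UU Pr delta pibar.
  exact: (sum_Eb ns Pr hpis hsup).
have h1 : \sum_(k : sample_idx ns) Ek Pr pis k (fun t => bb ns pis delta pibar t ^+ 2) <=
          \sum_(k : sample_idx ns) Ek Pr pis k (fun t => aa pis delta pibar k t ^+ 2).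
  rewrite /Ek exchange_big [X in _ <= X]exchange_big /=; apply: ler_sum => t _.
  exact: (mom2 ns hPr hpis hsup).
have h2 : NN R ns * UU Pr delta pibar ^+ 2 <= \sum_(k : sample_idx ns) Ek Pr pis k (fun t => bb ns pis delta pibar t) ^+ 2.
  have h0 : 0 <= \sum_(k : sample_idx ns) (Ek Pr pis k (fun t => bb ns pis delta pibar t) - UU Pr delta pibar) ^+ 2.
    by apply: sumr_ge0 => k _; exact: sqr_ge0.
  set u := UU Pr delta pibar.
  have : \sum_(k : sample_idx ns) (Ek Pr pis k (fun t => bb ns pis delta pibar t) - u) ^+ 2 =
         \sum_(k : sample_idx ns) Ek Pr pis k (fun t => bb ns pis delta pibar t) ^+ 2 - 2 * u * (NN R ns * u) + u ^+ 2 * NN R ns.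
    rewrite -hB.
    transitivity (\sum_(k : sample_idx ns) (Ek Pr pis k (fun t => bb ns pis delta pibar t) ^+ 2
         - 2 * u * Ek Pr pis k (fun t => bb ns pis delta pibar t) + u ^+ 2 * 1)).
      by apply: eq_bigr => k _; ring.
    by rewrite big_split sumrB /= -!mulr_sumr.
  move=> E; move: h0; rewrite E; lra.
have h3 : \sum_(k : sample_idx ns) UU Pr delta pibar ^+ 2 = NN R ns * UU Pr delta pibar ^+ 2.
  by rewrite /NN mulr_suml; apply: eq_bigr => k _; rewrite mul1r.
rewrite h3; lra.
Qed.
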